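(* Let $E$ be a Banach lattice. Then the set $B_{UDP}(E)$ of all $uaw$-Dunford-Pettis operators on $E$ is a closed subalgebra (with respect to the operator norm) of the algebra $B(E)$ of all bounded operators on $E$.
   Context: A net $(x_\alpha)$ in a Banach lattice $E$ is $uaw$-convergent to $x$ if $|x_\alpha-x|\wedge u\to 0$ weakly for every $u\in E_+$. A bounded operator $T\colon E\to E$ is $uaw$-Dunford-Pettis if every norm bounded $uaw$-null sequence $(x_n)$ in $E$ satisfies $\|Tx_n\|\to 0$. *)

(* Defs.v *)
From HB Require Import structures.
From mathcomp Require Import all_boot all_order all_algebra.
From mathcomp Require Import all_classical all_reals all_analysis.
Set Implicit Arguments. Unset Strict Implicit. Unset Printing Implicit Defensive.
Import Order.TTheory GRing.Theory Num.Theory.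
Import numFieldNormedType.Exports.
Local Open Scope ring_scope.
Local Open Scope classical_set_scope.

(* A (real) Banach lattice: a real Banach space E together with a vector
   lattice order (with explicit sup/inf operations) whose norm is a lattice
   norm: |x| <= |y| implies ||x|| <= ||y||. *)
Record BanachLattice (R : realType) (E : completeNormedModType R) := {
  bl_le : E -> E -> Prop;
  bl_join : E -> E -> E;
  bl_meet : E -> E -> E;
  bl_refl : forall x, bl_le x x;
  bl_antisym : forall x y, bl_le x y -> bl_le y x -> x = y;
  bl_trans : forall x y z, bl_le x y -> bl_le y z -> bl_le x z;
  bl_join_l : forall x y, bl_le x (bl_join x y);
  bl_join_r : forall x y, bl_le y (bl_join x y);
  bl_join_least : forall x y z, bl_le x z -> bl_le y z -> bl_le (bl_join x y) z;
  bl_meet_l : forall x y, bl_le (bl_meet x y) x;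
  bl_meet_r : forall x y, bl_le (bl_meet x y) y;
  bl_meet_greatest : forall x y z, bl_le z x -> bl_le z y -> bl_le z (bl_meet x y);
  bl_add : forall x y z, bl_le x y -> bl_le (x + z) (y + z);
  bl_scale : forall (a : R) x y, 0 <= a -> bl_le x y -> bl_le (a *: x) (a *: y);
  bl_norm_mono : forall x y,
    bl_le (bl_join x (- x)) (bl_join y (- y)) -> `|x| <= `|y|
}.

Section Defs.
Context {R : realType} {E : completeNormedModType R} (L : BanachLattice E).

Definition bl_abs (x : E) : E := bl_join L x (- x).

Definition cont_lin_functional (f : E -> R) : Prop :=
  (forall (a : R) (x y : E), f (a *: x + y) = a * f x + f y) /\ continuous f.

Definition bounded_operator (T : E -> E) : Prop :=
  (forall (a : R) (x y : E), T (a *: x + y) = a *: T x + T y) /\ continuous T.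

Definition weakly_null (y : nat -> E) : Prop :=
  forall f, cont_lin_functional f -> (fun n => f (y n)) @ \oo --> (0 : R).

Definition uaw_converges (x : nat -> E) (x0 : E) : Prop :=
  forall u : E, bl_le L 0 u ->
    weakly_null (fun n => bl_meet L (bl_abs (x n - x0)) u).

Definition norm_bounded_seq (x : nat -> E) : Prop :=
  exists M : R, forall n, `|x n| <= M.

Definition uaw_DP (T : E -> E) : Prop :=
  bounded_operator T /\
  forall x : nat -> E, norm_bounded_seq x -> uaw_converges x 0 ->
    (fun n => `|T (x n)|) @ \oo --> (0 : R).

End Defs.

(* Main.v *)
Require Import Defs.
From HB Require Import structures.
From mathcomp Require Import all_boot all_order all_algebra.
From mathcomp Require Import all_classical all_reals all_analysis.
From mathcomp Require Import ring lra.
Import Order.TTheory GRing.Theory Num.Theory.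
Import numFieldNormedType.Exports.
Local Open Scope ring_scope.

Lemma bop0 (R : realType) (E : completeNormedModType R) (T : E -> E) :
  bounded_operator T -> T 0 = 0.
Proof.
case=> hl _; have := hl (-1) 0 0.
by rewrite scaler0 addr0 scaleN1r addNr.
Qed.

Theorem proposition2p34 (R : realType) (E : completeNormedModType R)
    (L : BanachLattice E) :
  (* B_UDP(E) is a subalgebra of B(E) ... *)
  (forall T, uaw_DP L T -> bounded_operator T) /\
  uaw_DP L (fun _ => 0) /\
  (forall S T, uaw_DP L S -> uaw_DP L T -> uaw_DP L (fun x => S x + T x)) /\
  (forall (a : R) T, uaw_DP L T -> uaw_DP L (fun x => a *: T x)) /\
  (forall S T, uaw_DP L S -> uaw_DP L T -> uaw_DP L (fun x => S (T x))) /\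
  (* ... which is closed in the operator norm topology: *)
  (forall T, bounded_operator T ->
     (forall e : R, 0 < e -> exists S, uaw_DP L S /\
        forall x, `|S x - T x| <= e * `|x|) ->
     uaw_DP L T).
Proof.
split; first by move=> T [].
split.
  split; first split.
  - by move=> a x y; rewrite scaler0 addr0.
  - by move=> x; exact: cst_continuous.
  by move=> x _ _; rewrite normr0; exact: cvg_cst.
split.
  move=> S T [[hSl hSc] hS] [[hTl hTc] hT]; split; first split.
  - by move=> a x y; rewrite hSl hTl scalerDr addrACA.
  - by move=> x; exact: (continuousD (hSc x) (hTc x)).
  move=> x hb hu.
  apply: (@squeeze_cvgr _ _ _ _ (fun _ => 0) (fun n => `|S (x n)| + `|T (x n)|)).
  - by apply: nearW => n /=; rewrite normr_ge0 /= ler_normD.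
  - exact: cvg_cst.
  - have := cvgD (hS x hb hu) (hT x hb hu); rewrite addr0; apply.
split.
  move=> a T [[hTl hTc] hT]; split; first split.
  - by move=> b x y; rewrite hTl scalerDr !scalerA mulrC.
  - move=> x; apply: continuousZ; [exact: cst_continuous | exact: hTc].
  move=> x hb hu.
  have h := @cvgMl_tmp R nat \oo%classic _ _ `|a| 0 (hT x hb hu); rewrite mulr0 in h.
  suff -> : (fun n => `|a *: T (x n)|) = (fun n => `|a| * `|T (x n)|).
    by apply: h.
  by apply/funext => n; rewrite normrZ.
split.
  move=> S T [[hSl hSc] hS] [[hTl hTc] hT]; split; first split.
  - by move=> a x y; rewrite hTl hSl.
  - move=> x; exact: (continuous_comp (hTc x) (hSc (T x))).
  move=> x hb hu.
  have h1 : ((fun n => T (x n)) @ \oo --> 0)%classic by apply: norm_cvg0; exact: hT.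
  have h2 : ((fun n => S (T (x n))) @ \oo --> 0)%classic.
    rewrite -(@bop0 R E S (conj hSl hSc)).
    exact: (continuous_cvg _ (hSc 0) h1).
  by have := cvg_norm h2; rewrite normr0; apply.
move=> T hTb happ; split => // x [M hM] hu.
have M0 : 0 <= M by apply: le_trans (hM 0%N); exact: normr_ge0.
apply/cvgr0Pnorm_lt => eps eps0.
pose e := eps / (2 * (M + 1)).
have e0 : 0 < e by rewrite /e divr_gt0 // mulr_gt0 // ltr_wpDl.
have he : e * (M + 1) = eps / 2.
  by rewrite /e; field; rewrite gt_eqF // ltr_wpDl.
have [S [[_ hS] hST]] := happ e e0.
have := hS x (ex_intro _ M hM) hu => /cvgr0Pnorm_lt/(_ (eps / 2)).
rewrite divr_gt0 // => /(_ isT) hn.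
near=> n.
have hn' : `| `|S (x n)| | < eps / 2 by near: n.
rewrite normr_id in hn' *.
have t1 : `|T (x n)| <= `|S (x n)| + `|S (x n) - T (x n)|.
  by rewrite -[T (x n) in X in X <= _](subKr (S (x n))) (le_trans (ler_normD _ _)) // normrN.
have t2 : `|S (x n) - T (x n)| <= e * M.
  by apply: le_trans (hST _) _; rewrite ler_pM2l.
rewrite mulrDr mulr1 in he. rewrite normr_id; clearbody e; lra.
Unshelve. all: by end_near.
Qed.
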